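(* Let $H$ be a finite set, $S\subseteq\wp(H)$, $\mathcal{G}\subseteq S$, and fix $\alpha\in(0,1/2)$. Take $\kappa=\nu$, the classical rough inclusion function. Then there exist a set of integers $K\subseteq\{-1,0,1,2,\dots\}$ and a partition $\{S_i\}_{i\in K}$ of $S$ into nonempty blocks such that for every $i\in K$ and every $x\in S_i$, $x^{u_{\alpha^*}}=x^{u_i}$.
   Context: $\nu(A,B)=\#(A\cap B)/\#(A)$ if $A\neq\emptyset$ and $\nu(A,B)=1$ if $A=\emptyset$. For $x\in S$: $x^{u_{\alpha^*}}=\bigcup\{h\in\mathcal{G}:\nu(x,h)>\alpha\}$, and for an integer $k\ge -1$ the $k$-graded upper approximation is $x^{u_k}=\bigcup\{h\in\mathcal{G}:\#(h\cap x)>k\}$ (empty union $=\emptyset$). *)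

(* Defs.v *)
From mathcomp Require Import all_boot all_order all_algebra.
From mathcomp Require Import reals.
Set Implicit Arguments. Unset Strict Implicit. Unset Printing Implicit Defensive.
Import Order.TTheory GRing.Theory Num.Theory.
Local Open Scope ring_scope.

Definition nu {R : realType} (H : finType) (A B : {set H}) : R :=
  if A == set0 then 1 else #|A :&: B|%:R / #|A|%:R.

Definition upper_alpha {R : realType} (H : finType) (G : {set {set H}})
    (alpha : R) (x : {set H}) : {set H} :=
  \bigcup_(h in G | alpha < nu x h) h.

Definition upper_k (H : finType) (G : {set {set H}}) (k : int) (x : {set H})
    : {set H} :=
  \bigcup_(h in G | k < (#|h :&: x|)%:Z) h.

(* Main.v *)
Require Import Defs.
From mathcomp Require Import all_boot all_order all_algebra.
From mathcomp Require Import reals.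
Import Order.TTheory GRing.Theory Num.Theory.
Local Open Scope ring_scope.

Definition kf {R : realType} {H : finType} (alpha : R) (x : {set H}) : int :=
  if x == set0 then -1 else Num.floor (alpha * #|x|%:R).

Lemma key (R : realType) (H : finType) (alpha : R) (x h : {set H}) :
  alpha < 1 ->
  (alpha < nu x h) = (kf alpha x < (#|h :&: x|)%:Z).
Proof.
move=> a1; rewrite /nu /kf; case: eqP => [->|/eqP x0].
  by rewrite setI0 cards0 a1.
have n0 : (0 < #|x|%:R :> R) by rewrite ltr0n card_gt0.
rewrite ltr_pdivlMr // floor_lt_int setIC.
by rewrite -pmulrn.
Qed.

Theorem mainTheorem10 (R : realType) (H : finType) (S G : {set {set H}})
    (alpha : R) :
  G \subset S -> 0 < alpha -> alpha < 2^-1 ->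
  exists (K : int -> Prop) (Sfam : int -> {set {set H}}),
    [/\ (forall i, K i -> -1 <= i),
        (forall i, K i -> Sfam i != set0),
        (forall i j, K i -> K j -> i <> j -> [disjoint Sfam i & Sfam j]),
        (forall x, x \in S <-> exists2 i, K i & x \in Sfam i)
      & (forall i x, K i -> x \in Sfam i -> upper_alpha G alpha x = upper_k G i x)].
Proof.
move=> _ a0 ah.
have a1 : alpha < 1 by apply: (lt_trans ah); rewrite invf_lt1 // ltr1n.
pose Sf i := [set x in S | kf alpha x == i].
exists (fun i => Sf i != set0), Sf; split.
- move=> i /set0Pn [x]; rewrite inE => /andP [_ /eqP <-].
  rewrite /kf; case: eqP => // _.
  by apply: (le_trans (y := 0)) => //; rewrite floor_ge0 mulr_ge0 // ltW.
- by [].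
- move=> i j _ _ ij; rewrite -setI_eq0; apply/eqP/setP => x.
  rewrite !inE; apply/negbTE; apply/negP => /andP [/andP [_ /eqP e1] /andP [_ /eqP e2]].
  by apply: ij; rewrite -e1 -e2.
- move=> x; split.
    move=> xS; exists (kf alpha x); last by rewrite inE xS eqxx.
    by apply/set0Pn; exists x; rewrite inE xS eqxx.
  by move=> [i _]; rewrite inE => /andP [].
- move=> i x _; rewrite inE => /andP [_ /eqP <-].
  rewrite /upper_alpha /upper_k; apply: eq_bigl => h.
  by rewrite key.
Qed.
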